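(* For the decoupled single-device problem with parameters $\varphi>0$, $p\in(0,1)$, let $\Gamma(c)$ be the optimal threshold for sampling cost $c\ge0$ and let the passive set be $\mathcal{Q}(c)=\{n\in\mathbb{Z}:0\le n<\Gamma(c)\}$. Then $\Gamma(c)$ is nondecreasing in $c$; equivalently, for all $0\le c_1<c_2$, $\mathcal{Q}(c_1)\subseteq\mathcal{Q}(c_2)$. That is, the decoupled problem is indexable (and hence so is the $M$-device flow-sampling problem, each of whose devices yields such a decoupled problem).
   Context: Decoupled single-device problem: a Markov decision process with state space $\{0,1,2,\dots\}$ (a counter $n$) and action set $\{0,1\}$ ($0$ = rest, $1$ = sample). Transitions: from state $n$ under action $1$ go to state $0$ with probability $1$; under action $0$ go to state $0$ with probability $p$ and to state $n+1$ with probability $1-p$. Immediate cost: $C(n,1)=c+\varphi n$ and $C(n,0)=\varphi n$, where $c\ge0$ is a fixed sampling cost. The objective is to minimize the long-run average cost. The average-cost optimal policy is a threshold policy: for each $c$ there is an integer $\Gamma(c)\ge0$ such that it is optimal to rest in states $n<\Gamma(c)$ and to sample in states $n\ge\Gamma(c)$. A problem is called indexable if the passive set (set of states where resting is optimal) is monotone nondecreasing in the sampling cost $c$. *)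

(* Defs.v *)
From Stdlib Require Import Reals.
From Coquelicot Require Import Coquelicot.
Open Scope R_scope.

(* States: counters n : nat.  Actions: bool (true = sample, false = rest). *)

Definition cost (phi c : R) (n : nat) (a : bool) : R :=
  (if a then c else 0) + phi * INR n.

Definition policy := nat -> bool.

Definition threshold_policy (G : nat) : policy :=
  fun n => Nat.leb G n.

(* Expected total cost over the first T decision epochs, starting in state n,
   under policy pi.  Transitions: action 1 -> state 0 w.p. 1;
   action 0 -> state 0 w.p. p, state n+1 w.p. 1-p. *)
Fixpoint total_cost (phi p c : R) (pi : policy) (T : nat) : nat -> R :=
  match T with
  | O => fun _ => 0
  | S T' => fun n =>
      cost phi c n (pi n) +
      (if pi n then total_cost phi p c pi T' 0%nat
       else p * total_cost phi p c pi T' 0%nat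
            + (1 - p) * total_cost phi p c pi T' (S n))
  end.

Definition avg_cost (phi p c : R) (pi : policy) (n : nat) : Rbar :=
  LimSup_seq (fun T => total_cost phi p c pi T n / INR T).

Definition optimal_threshold (phi p c : R) (G : nat) : Prop :=
  forall (pi : policy) (n : nat),
    Rbar_le (avg_cost phi p c (threshold_policy G) n) (avg_cost phi p c pi n).

Definition passive_set (G : nat) : nat -> Prop := fun n => (n < G)%nat.

(* Main.v *)
Require Import Defs.
From Stdlib Require Import Reals Lra Lia Arith.
From Coquelicot Require Import Coquelicot.
Open Scope R_scope.

Section Aux.
Variables (phi p c : R) (G : nat).
Let q := 1 - p.

Fixpoint alpha (n : nat) : R :=
  match n with O => 0 | S k => (alpha k + 1) / q end.
Fixpoint beta (n : nat) : R :=
  match n with O => 0 | S k => (beta k + phi * INR k) / q end.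

Definition gg : R := (c + phi * INR G + beta G) / (alpha G + 1).
Definition hh (n : nat) : R := alpha n * gg - beta n.

Hypothesis Hp : 0 < p < 1.

Lemma alpha_nonneg : forall n, 0 <= alpha n.
Proof.
  induction n; simpl. lra. unfold q. apply Rle_mult_inv_pos; lra.
Qed.

Lemma poisson_rest : forall n, hh n + gg = phi * INR n + q * hh (S n).
Proof.
  intro n. unfold hh. simpl. unfold q. field. lra.
Qed.

Lemma poisson_sample : hh G + gg = c + phi * INR G.
Proof.
  unfold hh, gg. field. pose proof (alpha_nonneg G). lra.
Qed.

Definition MM : R := sum_f_R0 (fun k => Rabs (hh k)) G.

Lemma hh_le : forall n, (n <= G)%nat -> Rabs (hh n) <= MM.
Proof.
  intros n Hn. unfold MM.
  assert (Hg : forall m k, (k <= m)%nat -> Rabs (hh k) <= sum_f_R0 (fun k => Rabs (hh k)) m).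
  { induction m; intros k Hk.
    - replace k with 0%nat by lia. simpl. lra.
    - simpl. destruct (Nat.eq_dec k (S m)).
      + subst. assert (0 <= sum_f_R0 (fun k => Rabs (hh k)) m).
        { apply cond_pos_sum. intro; apply Rabs_pos. } lra.
      + pose proof (IHm k ltac:(lia)). pose proof (Rabs_pos (hh (S m))). lra. }
  apply Hg; auto.
Qed.

Lemma bound_D : forall T n, (n <= G)%nat ->
  Rabs (total_cost phi p c (threshold_policy G) T n - INR T * gg - hh n) <= MM.
Proof.
  induction T; intros n Hn.
  - simpl. replace (0 - 0 * gg - hh n) with (- hh n) by ring.
    rewrite Rabs_Ropp. apply hh_le; auto.
  - rewrite S_INR. simpl. unfold threshold_policy, cost.
    change (fun n0 : nat => (G <=? n0)%nat) with (threshold_policy G).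
    destruct (Nat.leb G n) eqn:E.
    + apply Nat.leb_le in E. assert (n = G) by lia. subst n.
      pose proof poisson_sample. assert (hh 0 = 0) by (unfold hh; simpl; ring).
      specialize (IHT 0%nat ltac:(lia)).
      replace (c + phi * INR G + total_cost phi p c (threshold_policy G) T 0 - (INR T + 1) * gg - hh G)
        with (total_cost phi p c (threshold_policy G) T 0 - INR T * gg - hh 0) by lra.
      exact IHT.
    + apply Nat.leb_gt in E.
      pose proof (poisson_rest n). assert (hh 0 = 0) by (unfold hh; simpl; ring).
      pose proof (IHT 0%nat ltac:(lia)) as I0. pose proof (IHT (S n) ltac:(lia)) as I1.
      set (x := total_cost phi p c (threshold_policy G) T 0 - INR T * gg - hh 0) in *.
      set (y := total_cost phi p c (threshold_policy G) T (S n) - INR T * gg - hh (S n)) in *.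
      replace (0 + phi * INR n + (p * total_cost phi p c (threshold_policy G) T 0 +
        (1 - p) * total_cost phi p c (threshold_policy G) T (S n)) - (INR T + 1) * gg - hh n)
        with (p * x + (1 - p) * y + (phi * INR n + (1 - p) * hh (S n) - hh n - gg) + p * hh 0)
        by (unfold x, y; ring).
      unfold q in H. rewrite H0. replace (phi * INR n + (1 - p) * hh (S n) - hh n - gg) with 0 by lra.
      replace (p * x + (1 - p) * y + 0 + p * 0) with (p * x + (1 - p) * y) by ring.
      eapply Rle_trans. apply Rabs_triang. rewrite !Rabs_mult.
      rewrite (Rabs_right p) by lra. rewrite (Rabs_right (1 - p)) by lra. nra.
Qed.

Lemma bound_all : forall n, exists K, forall T,
  Rabs (total_cost phi p c (threshold_policy G) T n - INR T * gg) <= K.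
Proof.
  intro n. destruct (le_lt_dec n G) as [Hn|Hn].
  - exists (MM + Rabs (hh n)). intro T. pose proof (bound_D T n Hn).
    replace (total_cost phi p c (threshold_policy G) T n - INR T * gg) with
      ((total_cost phi p c (threshold_policy G) T n - INR T * gg - hh n) + hh n) by ring.
    eapply Rle_trans. apply Rabs_triang. lra.
  - exists (Rabs (c + phi * INR n - gg) + MM). intro T. destruct T.
    + simpl. replace (0 - 0 * gg) with 0 by ring. rewrite Rabs_R0.
      pose proof (Rabs_pos (c + phi * INR n - gg)). pose proof (Rabs_pos (hh 0)).
      pose proof (hh_le 0 ltac:(lia)). lra.
    + rewrite S_INR. simpl. unfold cost.
      assert (E : threshold_policy G n = true) by (apply Nat.leb_le; lia). rewrite E.
      pose proof (bound_D T 0 ltac:(lia)). assert (hh 0 = 0) by (unfold hh; simpl; ring).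
      replace (c + phi * INR n + total_cost phi p c (threshold_policy G) T 0 - (INR T + 1) * gg)
        with ((c + phi * INR n - gg) + (total_cost phi p c (threshold_policy G) T 0 - INR T * gg - hh 0)) by lra.
      eapply Rle_trans. apply Rabs_triang. lra.
Qed.

Lemma avg_eq : forall n, avg_cost phi p c (threshold_policy G) n = Finite gg.
Proof.
  intro n. unfold avg_cost. apply is_LimSup_seq_unique. apply is_lim_LimSup_seq.
  apply is_lim_seq_spec. destruct (bound_all n) as [K HK].
  intro eps. assert (HK0 : 0 <= K) by (specialize (HK 0%nat); pose proof (Rabs_pos (total_cost phi p c (threshold_policy G) 0 n - INR 0 * gg)); lra).
  destruct (nfloor_ex (K / eps)) as [N HN].
  { apply Rle_mult_inv_pos; auto. apply cond_pos. }
  exists (S N). intros T HT.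
  assert (HT0 : 0 < INR T) by (apply lt_0_INR; lia).
  assert (HTN : INR N + 1 <= INR T) by (rewrite <- S_INR; apply le_INR; lia).
  replace (total_cost phi p c (threshold_policy G) T n / INR T - gg) with
    ((total_cost phi p c (threshold_policy G) T n - INR T * gg) / INR T) by (field; lra).
  unfold Rdiv. rewrite Rabs_mult. rewrite (Rabs_right (/ INR T)) by (left; apply Rinv_0_lt_compat; lra).
  specialize (HK T). pose proof (cond_pos eps).
  apply Rle_lt_trans with (K * / INR T).
  { apply Rmult_le_compat_r; [left; apply Rinv_0_lt_compat; lra| lra]. }
  apply (Rmult_lt_reg_r (INR T)); auto. rewrite Rmult_assoc, Rinv_l by lra.
  assert (K < eps * INR T).
  { assert (K / eps < INR T) by lra. unfold Rdiv in H0.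
    apply (Rmult_lt_compat_l eps) in H0; auto.
    replace (eps * (K * / eps)) with K in H0 by (field; lra). lra. }
  lra.
Qed.

End Aux.

Lemma alpha_strict (p : R) : 0 < p < 1 -> forall a b, (a < b)%nat -> alpha p a < alpha p b.
Proof.
  intros Hp a b Hab. induction Hab.
  - simpl. pose proof (alpha_nonneg p Hp a).
    apply (Rmult_lt_reg_r (1 - p)); [lra|]. unfold Rdiv. rewrite Rmult_assoc, Rinv_l by lra. nra.
  - simpl. pose proof (alpha_nonneg p Hp m).
    apply (Rmult_lt_reg_r (1 - p)); [lra|]. unfold Rdiv. rewrite Rmult_assoc, Rinv_l by lra. nra.
Qed.

Theorem lemma6 (phi p c1 c2 : R) (G1 G2 : nat) :
  0 < phi -> 0 < p < 1 -> 0 <= c1 -> c1 < c2 ->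
  optimal_threshold phi p c1 G1 ->
  optimal_threshold phi p c2 G2 ->
  (G1 <= G2)%nat /\ (forall n : nat, passive_set G1 n -> passive_set G2 n).
Proof.
  intros Hphi Hp Hc1 Hc Op1 Op2.
  assert (HG : (G1 <= G2)%nat).
  { destruct (le_lt_dec G1 G2) as [|Hlt]; auto. exfalso.
    specialize (Op1 (threshold_policy G2) 0%nat). specialize (Op2 (threshold_policy G1) 0%nat).
    rewrite !avg_eq in Op1, Op2 by auto. simpl in Op1, Op2. unfold gg in Op1, Op2.
    pose proof (alpha_strict p Hp _ _ Hlt) as Ha.
    pose proof (alpha_nonneg p Hp G2).
    set (A1 := alpha p G1 + 1) in *. set (A2 := alpha p G2 + 1) in *.
    assert (Hn : / A1 < / A2) by (apply Rinv_lt_contravar; unfold A1, A2 in *; nra).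
    set (K1 := phi * INR G1 + beta phi p G1) in *. set (K2 := phi * INR G2 + beta phi p G2) in *.
    unfold Rdiv in Op1, Op2.
    replace ((c1 + phi * INR G1 + beta phi p G1)) with (c1 + K1) in Op1 by (unfold K1; ring).
    replace ((c1 + phi * INR G2 + beta phi p G2)) with (c1 + K2) in Op1 by (unfold K2; ring).
    replace ((c2 + phi * INR G1 + beta phi p G1)) with (c2 + K1) in Op2 by (unfold K1; ring).
    replace ((c2 + phi * INR G2 + beta phi p G2)) with (c2 + K2) in Op2 by (unfold K2; ring).
    set (n1 := / A1) in *. set (n2 := / A2) in *. nra. }
  split; auto. intros n Hn. unfold passive_set in *. lia.
Qed.
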